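(* In the symmetric-erasure retransmission model described in the context (''waits do not loop''): let $\tau\ge 1$, $\ell\ge 1$, and let $u_1,\dots,u_{\ell+1}$ be vertices with $u_{i+1}\in\mathcal N_{u_i}$ for $1\le i\le \ell$, such that for every $1\le i\le\ell$ the event $W^{(\tau+i-1)}_{u_{i+1}u_i}$ occurs, and for every $2\le i\le \ell$ the event $W^{(\tau+i-1)}_{u_{i+1}u_i}$ is caused by $W^{(\tau+i-2)}_{u_iu_{i-1}}$. Then the vertices $u_1,\dots,u_\ell$ are pairwise distinct.
   Context: Let $\mathcal G=(\mathcal V,\mathcal E)$ be a finite connected undirected simple graph with $N=|\mathcal V|$ vertices and maximum degree $\Delta$; $\mathcal N_v$ denotes the set of neighbours of $v$. Fix an erasure probability $p\in[0,1]$. Erasures are symmetric: for every undirected edge $e\in\mathcal E$ and every round $t\ge 1$ there is a random variable $S^e_t\in\{0,1\}$ with $P(S^e_t=1)=1-p$ ($S^e_t=1$ means the edge works in round $t$, $S^e_t=0$ means the packets in both directions on $e$ are erased in round $t$), and all these variables are mutually independent. The retransmission protocol for distributed consensus is described by integer state variables $n_{vu}(t)$, for every ordered pair $(v,u)$ with $u\in\mathcal N_v$ and every $t\ge 0$ (the index of the latest iterate of node $u$ available at node $v$ after round $t$), together with $n_v(t)=1+\min_{u\in\mathcal N_v} n_{vu}(t)$ (the number of iterations of the consensus update $x^v_{k+1}=x^v_k-\epsilon\sum_{u\in\mathcal N_v}(x^v_k-x^u_k)$ that node $v$ has completed after round $t$). Initially $n_{vu}(0)=-1$ for all such pairs (so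 $n_v(0)=0$), and for all $t\ge 0$ $$n_{vu}(t+1)=n_{vu}(t)+S^{\{u,v\}}_{t+1}\cdot\mathbf 1\{n_u(t)>n_{vu}(t)\}.$$ Node $u$ is said to transmit a ''wait'' to node $v$ in round $t+1$ iff $n_{vu}(t)=n_u(t)$. For $\tau\ge1$ and $u\in\mathcal N_v$, $W^{(\tau)}_{uv}$ denotes the event that node $v$ transmits a wait to node $u$ in round $\tau$, i.e. $n_{uv}(\tau-1)=n_v(\tau-1)$. For vertices $v,u,u'$ with $u\in\mathcal N_v$, $u'\in\mathcal N_u$, if both $W^{(\tau)}_{uv}$ and $W^{(\tau+1)}_{u'u}$ occur, then $W^{(\tau)}_{uv}$ is said to cause $W^{(\tau+1)}_{u'u}$ if (a) $n_u(\tau-1)=1+n_{uv}(\tau-1)$ and (b) $n_{u'u}(\tau)=n_u(\tau)$. *)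

(* Defs.v *)
From HB Require Import structures.
From mathcomp Require Import all_boot all_order all_algebra.
Set Implicit Arguments. Unset Strict Implicit. Unset Printing Implicit Defensive.
Import Order.TTheory GRing.Theory Num.Theory.
Local Open Scope ring_scope.

(* Erasure realisation: S u v t = S^{{u,v}}_t (true = edge works in round t);
   symmetry S u v t = S v u t is assumed in the theorem. *)

(* minimum of a list of integers (0 on the empty list; never used for
   vertices with at least one neighbour) *)
Definition minlist (s : seq int) : int :=
  match s with [::] => 0 | x :: xs => foldr Order.min x xs end.

Section Protocol.
Variables (T : finType) (e : rel T) (S : T -> T -> nat -> bool).

Definition nv_of (st : T -> T -> int) (v : T) : int :=
  1 + minlist [seq st v u | u <- enum T & e v u].

(* nst t v u = n_{vu}(t) *)
Fixpoint nst (t : nat) : T -> T -> int :=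
  match t with
  | 0 => fun _ _ => -1
  | t'.+1 => fun v u =>
      let prev := nst t' in
      prev v u + ((S u v t'.+1 && (prev v u < nv_of prev u)) : nat)%:R
  end.

Definition nv (t : nat) (v : T) : int := nv_of (nst t) v.

(* W^{(tau)}_{uv}: v transmits a wait to u in round tau,
   i.e. n_{uv}(tau-1) = n_v(tau-1) *)
Definition Wait (tau : nat) (u v : T) : Prop := nst tau.-1 u v = nv tau.-1 v.

Definition causes (tau : nat) (u v u' : T) : Prop :=
  [/\ Wait tau u v, Wait tau.+1 u' u,
      nv tau.-1 u = 1 + nst tau.-1 u v
    & nst tau u' u = nv tau u].
End Protocol.

(* Main.v *)
Require Import Defs.
From HB Require Import structures.
From mathcomp Require Import all_boot all_order all_algebra.
From mathcomp Require Import zify.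
Import Order.TTheory GRing.Theory Num.Theory.

Local Open Scope ring_scope.

Lemma minD (a b a' b' c : int) : a <= a' + c -> b <= b' + c ->
  Order.min a b <= Order.min a' b' + c.
Proof. rewrite /Order.min; case: ifP; case: ifP; lia. Qed.

Lemma foldr_minD (T : Type) (f g : T -> int) (c x y : int) (r : seq T) :
  x <= y + c -> (forall z, f z <= g z + c) ->
  foldr Order.min x (map f r) <= foldr Order.min y (map g r) + c.
Proof. move=> hxy hfg; elim: r => //= z r IH; exact: minD. Qed.

Lemma minlistD (T : Type) (f g : T -> int) (c : int) (r : seq T) :
  (forall z, f z <= g z + c) -> 0 <= c ->
  minlist (map f r) <= minlist (map g r) + c.
Proof. case: r => [|z r] /= hfg hc; [lia| exact: foldr_minD]. Qed.

Lemma minl (a b : int) : Order.min a b <= a.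
Proof. rewrite /Order.min; case: ifP; lia. Qed.
Lemma minr (a b : int) : Order.min a b <= b.
Proof. rewrite /Order.min; case: ifP; lia. Qed.

Lemma foldr_min_le (T : eqType) (f : T -> int) x (r : seq T) z :
  z \in r -> foldr Order.min x (map f r) <= f z.
Proof.
elim: r => //= a r IH; rewrite in_cons => /orP [/eqP -> | /IH h].
  exact: minl.
exact: le_trans (minr _ _) h.
Qed.

Lemma foldr_min_lex (T : eqType) (f : T -> int) x (r : seq T) :
  foldr Order.min x (map f r) <= x.
Proof. elim: r => //= a r IH; exact: le_trans (minr _ _) IH. Qed.

Lemma minlist_le (T : eqType) (f : T -> int) (r : seq T) z :
  z \in r -> minlist (map f r) <= f z.
Proof.
case: r => //= a r; rewrite in_cons => /orP [/eqP -> | h].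
  exact: foldr_min_lex.
exact: foldr_min_le.
Qed.

Section S.
Variables (T : finType) (e : rel T) (S : T -> T -> nat -> bool).

Lemma nst_bounds t v u :
  nst e S t v u <= nst e S t.+1 v u <= nst e S t v u + 1.
Proof. rewrite /=; case: (S u v t.+1 && _) => /=; lia. Qed.

Lemma nst_noinc t v u : nst e S t v u = nv e S t u ->
  nst e S t.+1 v u = nst e S t v u.
Proof. rewrite /= /nv => ->; rewrite ltxx andbF /=; lia. Qed.

Lemma nv_mono t v : nv e S t v <= nv e S t.+1 v.
Proof.
rewrite /nv /nv_of.
have := @minlistD T (fun u => nst e S t v u) (fun u => nst e S t.+1 v u) 0
  [seq u <- enum T | e v u].
have h : forall z, nst e S t v z <= nst e S t.+1 v z + 0.
  by move=> z; have := nst_bounds t v z; lia.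
move=> /(_ h) /(_ (lexx 0)); rewrite /=; lia.
Qed.

Lemma nv_step t v : nv e S t.+1 v <= nv e S t v + 1.
Proof.
rewrite /nv /nv_of.
have := @minlistD T (fun u => nst e S t.+1 v u) (fun u => nst e S t v u) 1
  [seq u <- enum T | e v u].
have h : forall z, nst e S t.+1 v z <= nst e S t v z + 1.
  by move=> z; have := nst_bounds t v z; lia.
move=> /(_ h) /(_ ltac:(lia)); rewrite /=; lia.
Qed.

Lemma nv_stepk t k v : nv e S (t + k) v <= nv e S t v + k%:Z.
Proof.
elim: k => [|k IH]; first by rewrite addn0; lia.
have := nv_step (t + k) v; rewrite addnS; lia.
Qed.

Lemma nv_le_nb t v u : e v u -> nv e S t v <= 1 + nst e S t v u.
Proof.
move=> evu; rewrite /nv /nv_of.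
have := @minlist_le T (fun u => nst e S t v u) [seq u <- enum T | e v u] u.
rewrite mem_filter evu mem_enum /= => /(_ isT); rewrite /=; lia.
Qed.
End S.

Theorem lemma10 (T : finType) (e : rel T)
    (e_sym : symmetric e) (e_irr : irreflexive e)
    (e_conn : forall x y : T, connect e x y)
    (S : T -> T -> nat -> bool)
    (S_sym : forall u v t, S u v t = S v u t)
    (tau l : nat) (us : nat -> T) :
  (1 <= tau)%N -> (1 <= l)%N ->
  (forall i, (1 <= i <= l)%N -> e (us i) (us i.+1)) ->
  (forall i, (1 <= i <= l)%N -> Wait e S (tau + i - 1) (us i.+1) (us i)) ->
  (forall i, (2 <= i <= l)%N ->
     causes e S (tau + i - 2) (us i) (us i.-1) (us i.+1)) ->
  forall i j, (1 <= i <= l)%N -> (1 <= j <= l)%N -> us i = us j -> i = j.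
Proof.
move=> htau hl He HW HC.
pose b k := nv e S (tau + k - 2) (us k).
have key : forall k, (2 <= k <= l)%N ->
  b k = 1 + b k.-1 /\ nv e S (tau + k - 3) (us k) = b k.
  move=> k hk; have [hw _ ha _] := HC k hk.
  rewrite /Wait in hw.
  have es : (tau + k - 2).-1 = (tau + k - 3)%N by lia.
  have es2 : (tau + k - 2)%N = (tau + k - 3).+1 by lia.
  have eb : (tau + k.-1 - 2)%N = (tau + k - 3)%N by lia.
  rewrite es in hw ha.
  have enb : e (us k) (us k.-1).
    rewrite e_sym; have := He k.-1 ltac:(lia).
    by have -> : k.-1.+1 = k by lia.
  have h1 := @nst_noinc _ _ _ _ _ _ hw.
  have h2 := @nv_le_nb _ _ S (tau + k - 3).+1 _ _ enb.
  have h3 := @nv_mono _ e S (tau + k - 3) (us k).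
  rewrite /b eb es2; lia.
have gen : forall i d, (1 <= i)%N -> (i + d <= l)%N ->
    b (i + d)%N = b i + d%:Z.
  move=> i0 d hi; elim: d => [|d IH] hd; first by rewrite addn0; lia.
  have [k1 _] := key (i0 + d.+1)%N ltac:(lia).
  have e1 : (i0 + d.+1).-1 = (i0 + d)%N by lia.
  rewrite k1 e1 IH; last lia.
  lia.
have main : forall i j, (1 <= i)%N -> (i < j)%N -> (j <= l)%N ->
    us i <> us j.
  move=> i0 j0 hi hij hj heq.
  have [_ k2] := key j0 ltac:(lia).
  have := gen i0 (j0 - i0)%N hi ltac:(lia).
  have -> : (i0 + (j0 - i0))%N = j0 by lia.
  move=> g.
  have := @nv_stepk _ e S (tau + i0 - 2) (j0 - 1 - i0) (us i0).
  have -> : (tau + i0 - 2 + (j0 - 1 - i0))%N = (tau + j0 - 3)%N by lia.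
  rewrite heq k2 g /b heq; lia.
move=> i j hi hj heq.
case: (ltngtP i j) => // hij.
  by exfalso; apply: (main i j _ hij _ heq); lia.
by exfalso; apply: (main j i _ hij _ (esym heq)); lia.
Qed.
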